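(* Let $K<\mathsf{SL}_2(\mathbf{C})$ be finite, $H\trianglelefteq K$, and $\alpha$ an automorphism of $K/H$ with $\alpha^2=\mathrm{id}$. Let $G=G(K,H,\alpha)$. Then the subgroup $H\wr S_2=H^2\rtimes S_2$ of $K\wr S_2$ is normal in $G$ if and only if $\alpha=1$, and the subgroup $H^2$ is always normal in $G$.
   Context: $K\wr S_2=K^2\rtimes S_2$, where $S_2=\{1,s_{12}\}$ swaps the two factors. $G(K,H,\alpha)$ is the subgroup of $K\wr S_2$ generated by $s_{12}$, $H^2$, and all $(k_1,k_2)\in K^2$ with $k_2H=\alpha(k_1H)$. *)

(* Defs.v *)
From HB Require Import structures.
From mathcomp Require Import all_boot all_algebra all_fingroup all_solvable all_field all_character.
Set Implicit Arguments. Unset Strict Implicit. Unset Printing Implicit Defensive.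
Import GRing.Theory.

(* The wreath product  gT wr S_2 = gT^2 ><| S_2.
   An element (a1, a2, s) stands for (a1, a2) * s12^s, where s12 swaps the
   two factors; s12 (b1,b2) s12^-1 = (b2,b1). *)
Section Wreath.
Variable gT : finGroupType.
Local Open Scope group_scope.

Definition wr2 : Type := (gT * gT * bool)%type.
HB.instance Definition _ := Finite.on wr2.

Definition wr_mul (x y : wr2) : wr2 :=
  let: (a1, a2, s) := x in let: (b1, b2, t) := y in
  if s then (a1 * b2, a2 * b1, ~~ t) else (a1 * b1, a2 * b2, t).
Definition wr_one : wr2 := (1, 1, false).
Definition wr_inv (x : wr2) : wr2 :=
  let: (a1, a2, s) := x in
  if s then (a2^-1, a1^-1, true) else (a1^-1, a2^-1, false).

Lemma wr_mulA : associative wr_mul.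
Proof.
by move=> [[a1 a2] []] [[b1 b2] []] [[c1 c2] []]; rewrite /wr_mul /= !mulgA.
Qed.
Lemma wr_mul1 : left_id wr_one wr_mul.
Proof. by move=> [[a1 a2] []]; rewrite /wr_mul /wr_one /= !mul1g. Qed.
Lemma wr_mulV : left_inverse wr_one wr_inv wr_mul.
Proof. by move=> [[a1 a2] []]; rewrite /wr_mul /wr_one /wr_inv /= !mulVg. Qed.

HB.instance Definition _ := Finite_isGroup.Build wr2 wr_mulA wr_mul1 wr_mulV.

Definition s12 : wr2 := (1, 1, true).
Definition base2 (A : {set gT}) : {set wr2} :=
  [set x : wr2 | (x.1.1 \in A) && (x.1.2 \in A) && ~~ x.2].
Definition wreath2 (A : {set gT}) : {set wr2} :=
  [set x : wr2 | (x.1.1 \in A) && (x.1.2 \in A)].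
End Wreath.

Definition GKHa (gT : finGroupType) (K H : {group gT})
  (alpha : {perm coset_of H}) : {set wr2 gT} :=
  <<  [set s12 gT] :|: base2 H
      :|: [set x : wr2 gT | [&& x.1.1 \in K, x.1.2 \in K, ~~ x.2 &
                               coset H x.1.2 == alpha (coset H x.1.1)]] >>%g.
Arguments GKHa [gT] K H alpha.

(* Main.v *)
Require Import Defs.
From HB Require Import structures.
From mathcomp Require Import all_boot all_algebra all_fingroup all_solvable all_field all_character.

Local Open Scope ring_scope.

Lemma wrM (gT : finGroupType) (x y : wr2 gT) : (x * y)%g = wr_mul x y.
Proof. reflexivity. Qed.
Lemma wrV (gT : finGroupType) (x : wr2 gT) : (x^-1)%g = wr_inv x.
Proof. reflexivity. Qed.

Lemma normJ_sub (gT : finGroupType) (A : {set gT}) x :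
  (forall y, y \in A -> (y ^ x)%g \in A) -> x \in 'N(A)%g.
Proof.
move=> h; apply/normP/eqP; rewrite eqEcard cardJg leqnn andbT.
by apply/subsetP=> z /imsetP[y Hy ->]; exact: h.
Qed.

Lemma conjH (gT : finGroupType) (K H : {group gT}) k y :
  (H <| K)%g -> k \in K -> y \in H -> (k^-1 * y * k)%g \in H.
Proof.
move=> /normal_norm nHK Kk Hy; rewrite -mulgA.
by change ((y ^ k)%g \in H); rewrite (memJ_norm y (subsetP nHK k Kk)).
Qed.

Lemma cosetH (gT : finGroupType) (K H : {group gT}) k1 k2 :
  (H <| K)%g -> k1 \in K -> k2 \in K ->
  (coset H k1 == coset H k2) = ((k1^-1 * k2)%g \in H).
Proof.
move=> /normal_norm nHK K1 K2.
have N1 := subsetP nHK k1 K1; have N2 := subsetP nHK k2 K2.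
apply/eqP/idP => [e|h].
  apply: coset_idr; first by rewrite groupM ?groupV.
  rewrite morphM ?groupV // morphV //.
  by change ((coset H k1)^-1 * coset H k2 = 1)%g; rewrite e mulVg.
have -> : k2 = (k1 * (k1^-1 * k2))%g by rewrite mulgA mulgV mul1g.
rewrite morphM ?groupM ?groupV //.
change (coset H k1 = coset H k1 * coset H (k1^-1 * k2))%g.
rewrite (coset_id h). by rewrite mulg1.
Qed.

Arguments conjH {gT K H k y}.
Arguments cosetH {gT K H k1 k2}.

Theorem lemma4p1 (gT : finGroupType) (K H : {group gT})
    (rG : mx_representation algC K 2) (alpha : {perm coset_of H}) :
  mx_faithful rG ->
  (forall x, x \in K -> \det (rG x) = 1%R) ->
  (H <| K)%g ->
  (alpha \in Aut (K / H))%g ->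
  (alpha * alpha = 1)%g ->
  ((wreath2 H <| GKHa K H alpha)%g <-> alpha = 1%g) /\
  (base2 H <| GKHa K H alpha)%g.
Proof.
move=> _ _ nH aut _.
have sHK := normal_sub nH.
have inG : forall x, x \in [set s12 gT] :|: base2 H
      :|: [set x : wr2 gT | [&& x.1.1 \in K, x.1.2 \in K, ~~ x.2 &
                               coset H x.1.2 == alpha (coset H x.1.1)]] ->
      x \in GKHa K H alpha by move=> x; apply: mem_gen.
have s12G : s12 gT \in GKHa K H alpha by apply: inG; rewrite !inE eqxx.
have baseG : base2 H \subset GKHa K H alpha.
  by apply/subsetP=> x hx; apply: inG; rewrite !inE in hx *; rewrite hx orbT.
split; last first.
  rewrite /normal baseG /GKHa gen_subG; apply/subsetP => x.
  move=> hx; rewrite !inE in hx; case/orP: hx => [/orP[/eqP->|]|].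
  - apply: normJ_sub => -[[y1 y2] t]; rewrite !inE /= => /andP[/andP[h1 h2]].
    by case: t => // _; rewrite /conjg !wrM /= !invg1 !mul1g !mulg1 h1 h2.
  - case: x => -[h1 h2] [|]; rewrite /= ?andbF ?andbT // => /andP[H1 H2].
    apply: normJ_sub => -[[y1 y2] t]; rewrite !inE /= => /andP[/andP[Y1 Y2]].
    case: t => // _.
    by rewrite /conjg !wrM /= !mulgA !groupM ?groupV.
  - case: x => -[k1 k2] [|]; rewrite /= ?andbF ?andbT // => /and3P[K1 K2 _].
    apply: normJ_sub => -[[y1 y2] t]; rewrite !inE /= => /andP[/andP[Y1 Y2]].
    case: t => // _.
    by rewrite /conjg !wrM /= !mulgA !(conjH nH).
have wrG : wreath2 H \subset GKHa K H alpha.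
  apply/subsetP => -[[a1 a2] [|]] hx.
    have -> : ((a1, a2, true) : wr2 gT) = (((a1, a2, false) : wr2 gT) * s12 gT)%g.
      by change ((a1,a2,true) = wr_mul (a1,a2,false) (s12 gT)); rewrite /wr_mul /= !mulg1.
    by rewrite groupM // (subsetP baseG) // !inE /= andbT; rewrite !inE in hx.
  by rewrite (subsetP baseG) // !inE /= andbT; rewrite !inE in hx.
split => [/andP[_ nG]|ea].
  apply/permP => c; rewrite perm1.
  case: (boolP (c \in K / H)%g) => cin; last first.
    by move: aut; rewrite inE => /andP[pon _]; rewrite (out_perm pon).
  case/morphimP: (cin) => k1 N1 K1 Ec.
  case/morphimP: (Aut_closed aut cin) => k2 N2 K2 e0.
  have e : alpha (coset H k1) = coset H k2 by rewrite -Ec.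
  rewrite Ec.
  have xG : ((k1, k2, false) : wr2 gT) \in GKHa K H alpha.
    by apply: inG; rewrite !inE /= K1 K2 -e eqxx !orbT.
  have := memJ_norm (s12 gT) (subsetP nG _ xG).
  rewrite !inE /= !mul1g group1 => /andP[h _].
  by rewrite e; apply/eqP; rewrite eq_sym (cosetH nH).
rewrite /normal wrG /GKHa gen_subG; apply/subsetP => x.
move=> hx; rewrite ea !inE in hx; case/orP: hx => [/orP[/eqP->|]|].
- apply: normJ_sub => -[[y1 y2] t]; rewrite !inE /= => /andP[h1 h2].
  by case: t; rewrite /conjg !wrM /= !invg1 !mul1g !mulg1 h1 h2.
- case: x => -[h1 h2] [|]; rewrite /= ?andbF ?andbT // => /andP[H1 H2].
  apply: normJ_sub => -[[y1 y2] t]; rewrite !inE /= => /andP[Y1 Y2].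
  by case: t; rewrite /conjg !wrM /= !mulgA !groupM ?groupV.
- case: x => -[k1 k2] [|]; rewrite /= ?andbF ?andbT ?perm1 // => /and3P[K1 K2 e].
  have e12 : (k1^-1 * k2)%g \in H by rewrite -(cosetH nH) // eq_sym.
  have e21 : (k2^-1 * k1)%g \in H by rewrite -(cosetH nH).
  apply: normJ_sub => -[[y1 y2] t]; rewrite !inE /= => /andP[Y1 Y2].
  case: t; rewrite /conjg !wrM /= ?mulgA ?(conjH nH) //.
  have -> : (k1^-1 * y1 * k2 = (k1^-1 * y1 * k1) * (k1^-1 * k2))%g.
    by rewrite !mulgA mulgK.
  have -> : (k2^-1 * y2 * k1 = (k2^-1 * y2 * k2) * (k2^-1 * k1))%g.
    by rewrite !mulgA mulgK.
  by rewrite (groupM (conjH nH K1 Y1) e12) (groupM (conjH nH K2 Y2) e21).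
Qed.
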